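(* Let $G$ and $H$ be nontrivial finite connected simple graphs and let $\ell\geq 1$ be an integer. (1) If $S$ is an $\ell$-solid-resolving set of $G\Box H$, then the projection of $S$ onto $G$ is an $\ell$-solid-resolving set of $G$, and the projection of $S$ onto $H$ is an $\ell$-solid-resolving set of $H$. (2) If $T$ is an $\ell$-solid-resolving set of $G$ and $U$ is an $\ell$-solid-resolving set of $H$, then $T\times U=\{tu: t\in T,u\in U\}$ is an $\ell$-solid-resolving set of $G\Box H$. (3) $\max\{\beta_\ell^s(G),\beta_\ell^s(H)\}\leq \beta_\ell^s(G\Box H)\leq \beta_\ell^s(G)\cdot\beta_\ell^s(H)$.
   Context: The Cartesian product $G\Box H$ has vertex set $\{av: a\in V(G), v\in V(H)\}$, with distinct $av,bu$ adjacent iff ($a=b$ and $uv\in E(H)$) or ($ab\in E(G)$ and $u=v$). The projection of $X\subseteq V(G\Box H)$ onto $G$ is $\{x_1: x_1x_2\in X\}$, and onto $H$ is $\{x_2: x_1x_2\in X\}$. For a graph, $d$ is the shortest-path distance, $d(s,X)=\min_{x\in X}d(s,x)$ for nonempty $X$, and $\mathcal{D}_S(X)=(d(s_1,X),\dots,d(s_k,X))$ for $S=\{s_1,\dots,s_k\}$. $S$ is an $\ell$-solid-resolving set if $\mathcal{D}_S(X)\neq\mathcal{D}_S(Y)$ for all distinct nonempty vertex sets $X,Y$ with $|X|\leq\ell$ ($Y$ arbitrary); $\beta_\ell^s$ is the minimum size of such a set. *)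

(* Defs.v *)
From mathcomp Require Import all_boot.
Set Implicit Arguments. Unset Strict Implicit. Unset Printing Implicit Defensive.

Definition simple_graph (V : finType) (e : rel V) :=
  symmetric e /\ irreflexive e.

Definition connected_graph (V : finType) (e : rel V) :=
  forall x y : V, connect e x y.

Definition nontrivial (V : finType) := 1 < #|V|.

Definition walk_len (V : finType) (e : rel V) (x y : V) (k : nat) : bool :=
  [exists p : k.-tuple V, path e x p && (last x p == y)].

(* shortest-path distance: least k with a walk of length k from x to y
   (returns #|V| if y is unreachable, which cannot happen when connected) *)
Definition dist (V : finType) (e : rel V) (x y : V) : nat :=
  find (walk_len e x y) (iota 0 #|V|).

(* d(s, X) = min_{x in X} d(s, x)  (only used for nonempty X) *)
Definition dist_set (V : finType) (e : rel V) (s : V) (X : {set V}) : nat :=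
  \big[minn/#|V|]_(x in X) dist e s x.

Definition solid_resolving (V : finType) (e : rel V) (l : nat) (S : {set V}) : bool :=
  [forall X : {set V}, forall Y : {set V},
    [&& X != set0, Y != set0, #|X| <= l & X != Y] ==>
    [exists s in S, dist_set e s X != dist_set e s Y]].

(* beta^s_l: minimum size of an l-solid-resolving set (V itself is one) *)
Definition beta_solid (V : finType) (e : rel V) (l : nat) : nat :=
  \big[minn/#|V|]_(S : {set V} | solid_resolving e l S) #|S|.

Definition cart (V1 V2 : finType) (e1 : rel V1) (e2 : rel V2) : rel (V1 * V2) :=
  fun a b => ((a.1 == b.1) && e2 a.2 b.2) || (e1 a.1 b.1 && (a.2 == b.2)).

(* Main.v *)
Require Import Defs.
From mathcomp Require Import all_boot.
From mathcomp Require Import zify.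
From HB Require Import structures.
HB.instance Definition _ := SemiGroup.isComLaw.Build nat minn minnA minnC.
Set Implicit Arguments. Unset Strict Implicit. Unset Printing Implicit Defensive.

Section Walks.
Variable V : finType.
Variable e : rel V.

Inductive W : V -> V -> nat -> Prop :=
| W0 x : W x x 0
| WS x x' y k : e x x' -> W x' y k -> W x y k.+1.

Lemma walk_lenP x y k : reflect (W x y k) (walk_len e x y k).
Proof.
apply: (iffP idP).
- elim: k x => [|k IH] x.
  + case/existsP => t /andP [_ /eqP]. rewrite (tuple0 t) /= => <-. constructor.
  + case/existsP => t; case/tupleP: t => t0 t /andP [/= /andP [ex pt] /eqP ly].
    apply: (WS ex); apply: IH; apply/existsP; exists t; by rewrite pt ly eqxx.
- elim => [z|x0 x' y' k' ex _ /existsP [t /andP [pt /eqP ly]]].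
  + apply/existsP; exists [tuple]; by rewrite /= eqxx.
  + apply/existsP; exists [tuple of x' :: t]; by rewrite /= ex pt ly eqxx.
Qed.

Lemma W_trans x y z k m : W x y k -> W y z m -> W x z (k + m).
Proof.
elim => [x0|x0 x' y' k' ex _ IH] hm; first by rewrite add0n.
rewrite addSn; exact: WS ex (IH hm).
Qed.

Lemma W_connect x y k : W x y k -> connect e x y.
Proof.
elim => [x0|x0 x' y' k' ex _ IH]; first exact: connect0.
exact: connect_trans (connect1 ex) IH.
Qed.

Lemma path_W x p : path e x p -> W x (last x p) (size p).
Proof.
elim: p x => [|y p IH] x /=; first by constructor.
case/andP => ex pp; exact: WS ex (IH _ pp).
Qed.

Lemma connect_Wsmall x y : connect e x y -> exists2 k, k < #|V| & W x y k.
Proof.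
case/connectP => p pp ->. case/shortenP: pp => p' pp' up' _.
exists (size p'); last exact: path_W.
have := max_card (mem (x :: p')). by rewrite (card_uniqP up').
Qed.

Lemma dist_max x y : dist e x y <= #|V|.
Proof. rewrite /dist. have := find_size (walk_len e x y) (iota 0 #|V|). by rewrite size_iota. Qed.

Lemma dist_le x y k : W x y k -> dist e x y <= k.
Proof.
move=> Hw. case: (ltnP k #|V|) => hk; last exact: leq_trans (dist_max x y) hk.
rewrite leqNgt; apply/negP => lt.
have := @before_find _ 0 (walk_len e x y) (iota 0 #|V|) k lt.
rewrite nth_iota // add0n => /negbT/walk_lenP; done.
Qed.

Hypothesis ce : connected_graph e.

Lemma dist_W x y : W x y (dist e x y).
Proof.
have [k' hk' Hw] := connect_Wsmall (ce x y).
have hh : has (walk_len e x y) (iota 0 #|V|).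
  apply/hasP; exists k'; [by rewrite mem_iota | exact/walk_lenP].
have := nth_find 0 hh. rewrite has_find size_iota in hh.
rewrite /dist nth_iota // add0n => /walk_lenP; done.
Qed.

Lemma dist0 x : dist e x x = 0.
Proof. apply/eqP; rewrite -leqn0; apply: dist_le (W0 x). Qed.

Lemma dist0_eq x y : dist e x y = 0 -> x = y.
Proof. move=> E; have := dist_W x y; rewrite E => H; by inversion H. Qed.

End Walks.

Section DistSet.
Variable V : finType.
Variable e : rel V.

Lemma dist_set_le s (X : {set V}) x : x \in X -> dist_set e s X <= dist e s x.
Proof. move=> hx; by rewrite /dist_set (bigD1 x) //= geq_minl. Qed.

Lemma dist_set_attained s (X : {set V}) : X != set0 ->
  exists2 x, x \in X & dist_set e s X = dist e s x.
Proof.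
case/set0Pn => x0 hx0.
have : dist_set e s X = #|V| \/ exists2 x, x \in X & dist_set e s X = dist e s x.
  rewrite /dist_set.
  apply: (big_ind (fun m => m = #|V| \/ exists2 x, x \in X & m = dist e s x)).
  - by left.
  - move=> a b ha hb. case: (leqP a b) => h.
    + by [].
    + by [].
  - move=> x hx; right; by exists x.
case => [h|//]. exists x0 => //. apply/eqP; rewrite eqn_leq dist_set_le //= h.
exact: dist_max.
Qed.

Lemma solidP l (S : {set V}) : solid_resolving e l S <->
  (forall X y, X != set0 -> #|X| <= l -> y \notin X ->
     exists2 s, s \in S & dist e s y < dist_set e s X).
Proof.
split.
- move=> /forallP H X y hX hl hy. have := H X => /forallP /(_ (y |: X)).
  have hyX : y \in y |: X by rewrite setU11.
  have -> : (y |: X != set0) by apply/set0Pn; exists y.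
  have -> : X != y |: X by apply/negP => /eqP E; move: hyX; rewrite -E => h; by rewrite h in hy.
  rewrite hX hl /= => /existsP [s /andP [hs hne]]. exists s => //.
  rewrite ltnNge; apply/negP => hle. apply: (negP hne). rewrite eqn_leq; apply/andP; split.
  + have hne' : y |: X != set0 by apply/set0Pn; exists y.
    have [x hx ->] := dist_set_attained s hne'.
    move: hx; rewrite in_setU1 => /orP [/eqP ->//|hx]. exact: dist_set_le.
  + have [x hx ->] := dist_set_attained s hX. apply: dist_set_le. by rewrite setU1r.
- move=> H; apply/forallP => X; apply/forallP => Y; apply/implyP => /and4P [hX hY hl hXY].
  case: (boolP (Y \subset X)) => hs.
  + have : ~~ (X \subset Y).
      apply/negP => hs'. by rewrite eqEsubset hs hs' in hXY.
    case/subsetPn => x hxX hxY.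
    have hlY : #|Y| <= l by apply: leq_trans (subset_leq_card hs) hl.
    have [s hs1 hlt] := H Y x hY hlY hxY.
    apply/existsP; exists s; rewrite hs1 /= neq_ltn.
    by rewrite (leq_ltn_trans (dist_set_le s hxX) hlt).
  + case/subsetPn: hs => y hyY hyX.
    have [s hs1 hlt] := H X y hX hl hyX.
    apply/existsP; exists s; rewrite hs1 /= neq_ltn.
    by rewrite (leq_ltn_trans (dist_set_le s hyY) hlt) orbT.
Qed.

Hypothesis ce : connected_graph e.

Lemma setT_solid l : solid_resolving e l setT.
Proof.
apply/solidP => X y hX _ hy. exists y; first by rewrite inE.
rewrite dist0 //. have [x hx ->] := dist_set_attained y hX.
rewrite lt0n; apply/negP => /eqP/(dist0_eq ce) E. by rewrite E hx in hy.
Qed.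

Lemma beta_le l (S : {set V}) : solid_resolving e l S -> beta_solid e l <= #|S|.
Proof. move=> hS; by rewrite /beta_solid (bigD1 S) //= geq_minl. Qed.

Lemma beta_att l : exists2 S, solid_resolving e l S & beta_solid e l = #|S|.
Proof.
have : beta_solid e l = #|V| \/ exists2 S, solid_resolving e l S & beta_solid e l = #|S|.
  rewrite /beta_solid.
  apply: (big_ind (fun m => m = #|V| \/ exists2 S, solid_resolving e l S & m = #|S|)).
  - by left.
  - move=> a b ha hb. case: (leqP a b) => h.
    + by [].
    + by [].
  - move=> S hS; right; by exists S.
case => [h|//]. exists setT; first exact: setT_solid. by rewrite cardsT h.
Qed.

Lemma sep l (T X : {set V}) y : nontrivial V -> solid_resolving e l T -> 1 <= l ->
  #|X| <= l -> y \notin X ->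
  exists2 t, t \in T & forall x, x \in X -> dist e t y < dist e t x.
Proof.
move=> n hT hl hX hy. have H := (iffLR (solidP l T) hT).
case: (eqVneq X set0) => [E|hX0].
- have [a _] : exists a : V, a \in [set: V] by apply/card_gt0P; rewrite cardsT; apply: ltnW.
  have : 0 < #|[set~ a]| by rewrite cardsC1; move: n; rewrite /nontrivial; lia.
  case/card_gt0P => b; rewrite in_setC1 => hb.
  have c1 : #|[set a]| <= l by rewrite cards1.
  have c2 : b \notin [set a] by rewrite in_set1.
  have c0 : [set a] != set0 by apply/set0Pn; exists a; rewrite set11.
  have [t ht _] := H [set a] b c0 c1 c2.
  exists t => // x; by rewrite E inE.
- have [t ht hlt] := H X y hX0 hX hy. exists t => // x hx.
  exact: leq_trans hlt (dist_set_le t hx).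
Qed.

End DistSet.

Section Cart.
Variables V1 V2 : finType.
Variable e1 : rel V1.
Variable e2 : rel V2.
Hypothesis c1 : connected_graph e1.
Hypothesis c2 : connected_graph e2.

Lemma W_lift1 a b u k : W e1 a b k -> W (cart e1 e2) (a,u) (b,u) k.
Proof.
elim => [x|x x' y k' ex _ IH]; first by constructor.
apply: WS IH. by rewrite /cart /= ex eqxx orbT.
Qed.

Lemma W_lift2 a u v k : W e2 u v k -> W (cart e1 e2) (a,u) (a,v) k.
Proof.
elim => [x|x x' y k' ex _ IH]; first by constructor.
apply: WS IH. by rewrite /cart /= ex eqxx.
Qed.

Lemma W_proj x z k : W (cart e1 e2) x z k ->
  exists k1 k2, [/\ k = k1 + k2, W e1 x.1 z.1 k1 & W e2 x.2 z.2 k2].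
Proof.
elim => [x0|x0 x' y k' ex _ [k1 [k2 [-> h1 h2]]]].
  exists 0, 0; split; by constructor.
move: ex; rewrite /cart => /orP [/andP [/eqP E ex]|/andP [ex /eqP E]].
- exists k1, k2.+1; split; [by rewrite addnS | by rewrite E | exact: WS ex h2].
- exists k1.+1, k2; split; [by rewrite addSn | exact: WS ex h1 | by rewrite E].
Qed.

Lemma ccart : connected_graph (cart e1 e2).
Proof.
move=> [a u] [b v]. apply: W_connect.
exact: W_trans (W_lift1 u (dist_W c1 a b)) (W_lift2 b (dist_W c2 u v)).
Qed.

Lemma dist_cart x y : dist (cart e1 e2) x y = dist e1 x.1 y.1 + dist e2 x.2 y.2.
Proof.
apply/eqP; rewrite eqn_leq; apply/andP; split.
- case: x => a u; case: y => b v /=. apply: dist_le.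
  exact: W_trans (W_lift1 u (dist_W c1 a b)) (W_lift2 b (dist_W c2 u v)).
- have [k1 [k2 [E h1 h2]]] := W_proj (dist_W ccart x y).
  rewrite E leq_add //; exact: dist_le.
Qed.

Variable l : nat.
Hypothesis n1 : nontrivial V1.
Hypothesis n2 : nontrivial V2.
Hypothesis hl : 1 <= l.

Lemma proj1_solid S : solid_resolving (cart e1 e2) l S ->
  solid_resolving e1 l [set x.1 | x in S].
Proof.
have [v _] : exists v : V2, v \in [set: V2] by apply/card_gt0P; rewrite cardsT; apply: ltnW.
move/solidP => H; apply/solidP => X y hX hlX hy.
have hX' : setX X [set v] != set0.
  case/set0Pn: hX => x hx; apply/set0Pn; exists (x, v); by rewrite in_setX hx set11.
have q1 : #|setX X [set v]| <= l by rewrite cardsX cards1 muln1.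
have q2 : (y, v) \notin setX X [set v] by rewrite in_setX (negbTE hy).
have [[a u] hs hlt] := H (setX X [set v]) (y, v) hX' q1 q2.
exists a; first by apply/imsetP; exists (a, u).
have [x hx ->] := dist_set_attained e1 a hX.
have hxv : (x, v) \in setX X [set v] by rewrite in_setX hx set11.
have := dist_set_le (cart e1 e2) (a, u) hxv.
move: hlt; rewrite !dist_cart /=. lia.
Qed.

Lemma proj2_solid S : solid_resolving (cart e1 e2) l S ->
  solid_resolving e2 l [set x.2 | x in S].
Proof.
have [v _] : exists v : V1, v \in [set: V1] by apply/card_gt0P; rewrite cardsT; apply: ltnW.
move/solidP => H; apply/solidP => X y hX hlX hy.
have hX' : setX [set v] X != set0.
  case/set0Pn: hX => x hx; apply/set0Pn; exists (v, x); by rewrite in_setX hx set11.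
have q1 : #|setX [set v] X| <= l by rewrite cardsX cards1 mul1n.
have q2 : (v, y) \notin setX [set v] X by rewrite in_setX (negbTE hy) andbF.
have [[a u] hs hlt] := H (setX [set v] X) (v, y) hX' q1 q2.
exists u; first by apply/imsetP; exists (a, u).
have [x hx ->] := dist_set_attained e2 u hX.
have hxv : (v, x) \in setX [set v] X by rewrite in_setX hx set11.
have := dist_set_le (cart e1 e2) (a, u) hxv.
move: hlt; rewrite !dist_cart /=. lia.
Qed.

Lemma prod_solid T U : solid_resolving e1 l T -> solid_resolving e2 l U ->
  solid_resolving (cart e1 e2) l (setX T U).
Proof.
move=> hT hU; apply/solidP => X y hX hlX hy.
set P := [set x.1 | x in [set x in X | x.1 != y.1]].
set Q := [set x.2 | x in [set x in X | x.2 != y.2]].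
have hsub : forall p : pred (V1 * V2), #|[set x in X | p x]| <= l.
  move=> p; apply: leq_trans hlX; apply: subset_leq_card.
  apply/subsetP => x; rewrite inE => /andP [] //.
have hP : #|P| <= l by apply: leq_trans (leq_imset_card _ _) (hsub _).
have hQ : #|Q| <= l by apply: leq_trans (leq_imset_card _ _) (hsub _).
have hyP : y.1 \notin P.
  apply/imsetP => [[x]]; rewrite inE => /andP [_ ne] E; by rewrite E eqxx in ne.
have hyQ : y.2 \notin Q.
  apply/imsetP => [[x]]; rewrite inE => /andP [_ ne] E; by rewrite E eqxx in ne.
have [t ht h1] := sep n1 hT hl hP hyP.
have [u hu h2] := sep n2 hU hl hQ hyQ.
exists (t, u); first by rewrite in_setX ht hu.
have [x hx ->] := dist_set_attained (cart e1 e2) (t, u) hX. rewrite !dist_cart /=.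
case: (eqVneq x.1 y.1) => [E1|N1]; case: (eqVneq x.2 y.2) => [E2|N2].
- have exy : x = y by apply/eqP; rewrite -pair_eqE /= E1 E2 !eqxx.
  by rewrite -exy hx in hy.
- have m2 : x.2 \in Q by apply/imsetP; exists x; rewrite // inE hx N2.
  have := h2 x.2 m2.
  by rewrite E1 ltn_add2l.
- have m1 : x.1 \in P by apply/imsetP; exists x; rewrite // inE hx N1.
  have := h1 x.1 m1.
  by rewrite E2 ltn_add2r.
- have m1 : x.1 \in P by apply/imsetP; exists x; rewrite // inE hx N1.
  have := h1 x.1 m1.
  have m2 : x.2 \in Q by apply/imsetP; exists x; rewrite // inE hx N2.
  have := h2 x.2 m2.
  move=> a b; exact: leq_add b (ltnW a).
Qed.

End Cart.

Theorem mainTheorem8 (V1 V2 : finType) (e1 : rel V1) (e2 : rel V2)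
  (sg1 : simple_graph e1) (sg2 : simple_graph e2)
  (c1 : connected_graph e1) (c2 : connected_graph e2)
  (n1 : nontrivial V1) (n2 : nontrivial V2)
  (l : nat) (hl : 1 <= l) :
  (forall S : {set V1 * V2}, solid_resolving (cart e1 e2) l S ->
     solid_resolving e1 l [set x.1 | x in S] /\
     solid_resolving e2 l [set x.2 | x in S]) /\
  (forall (T : {set V1}) (U : {set V2}),
     solid_resolving e1 l T -> solid_resolving e2 l U ->
     solid_resolving (cart e1 e2) l (setX T U)) /\
  (maxn (beta_solid e1 l) (beta_solid e2 l) <= beta_solid (cart e1 e2) l
   <= beta_solid e1 l * beta_solid e2 l).
Proof.
split; first by move=> S hS; split; [exact: proj1_solid hS | exact: proj2_solid hS].
split; first by move=> T U; exact: prod_solid.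
apply/andP; split.
- rewrite geq_max. have [S hS ->] := beta_att (ccart c1 c2) l.
  apply/andP; split.
  + have h1 := beta_le (proj1_solid c1 c2 n1 n2 hl hS). apply: leq_trans h1 _. exact: leq_imset_card.
  + have h2 := beta_le (proj2_solid c1 c2 n1 n2 hl hS). apply: leq_trans h2 _. exact: leq_imset_card.
- have [T hT ->] := beta_att c1 l; have [U hU ->] := beta_att c2 l.
  rewrite -cardsX. apply: beta_le. exact: prod_solid.
Qed.
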